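(* Let $N\ge 1$ be an integer and let $P=p_1p_2\cdots p_k$ be a product of $k\ge1$ primes. For $1\le n\le N$ let $\widetilde w_n\in\{0,1,\dots,P-1\}$ be the remainder of $w_n$ upon division by $P$. If $N\,\widetilde w_n<P$ for each $1\le n\le N$, then $\widetilde w_n=w_n$ for each $1\le n\le N$.
   Context: The stack-sorting map $s$ is defined recursively: $s$ sends the empty permutation to itself, and if $\pi$ is nonempty with largest entry $m$, written $\pi=LmR$, then $s(\pi)=s(L)\,s(R)\,m$. A permutation $\pi$ is $3$-stack-sortable if $s(s(s(\pi)))$ is increasing. $w_n$ denotes the number of $3$-stack-sortable permutations of $\{1,\dots,n\}$. *)

(* Defs.v *)
From mathcomp Require Import all_boot.
Set Implicit Arguments. Unset Strict Implicit. Unset Printing Implicit Defensive.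

(* Stack-sorting map on sequences of distinct naturals:
   s([]) = [], s(L m R) = s(L) s(R) m with m the largest entry.
   Implemented with fuel; fuel = size s suffices since L and R are shorter. *)
Fixpoint stack_sort_aux (fuel : nat) (s : seq nat) : seq nat :=
  match fuel with
  | 0 => s
  | f.+1 =>
      if s is [::] then [::] else
      let m := foldr maxn 0 s in
      let i := index m s in
      stack_sort_aux f (take i s) ++ stack_sort_aux f (drop i.+1 s) ++ [:: m]
  end.

Definition stack_sort (s : seq nat) : seq nat := stack_sort_aux (size s) s.

Definition three_stack_sortable (s : seq nat) : bool :=
  sorted ltn (stack_sort (stack_sort (stack_sort s))).

(* w_n : number of 3-stack-sortable permutations of {1,...,n}
   (permutations returns a duplicate-free list of all permutations) *)
Definition w (n : nat) : nat :=
  count three_stack_sortable (permutations (iota 1 n)).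

(* Main.v *)
Require Import Defs.
From mathcomp Require Import all_boot.
From mathcomp Require Import zify.

Lemma w0 : w 0 = 1. Proof. by []. Qed.

Lemma max_in (x : nat) s : foldr maxn 0 (x :: s) \in x :: s.
Proof.
elim: s x => [|y s IH] x /=; first by rewrite maxn0 inE.
rewrite /maxn; case: ifP => _; last by rewrite inE eqxx.
by have := IH y; rewrite /= !inE => ->; rewrite orbT.
Qed.

Lemma max_ge s y : y \in s -> y <= foldr maxn 0 s.
Proof.
elim: s => [|x s IH] //=; rewrite inE => /orP[/eqP->|/IH h].
  by rewrite leq_maxl.
by rewrite (leq_trans h) // leq_maxr.
Qed.

Lemma split_at (m : nat) t : m \in t -> t = take (index m t) t ++ m :: drop (index m t).+1 t.
Proof.
move=> mt; have Hi : index m t < size t by rewrite index_mem.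
by rewrite -{2}(nth_index m mt) -(drop_nth m Hi) cat_take_drop.
Qed.

Lemma perm_aux f s : perm_eq (stack_sort_aux f s) s.
Proof.
elim: f s => [|f IH] [|x s] //=.
set m := foldr maxn 0 (x :: s).
set t := x :: s.
have mt : m \in t by exact: max_in.
rewrite [X in perm_eq _ X](@split_at m t mt).
apply: perm_trans (perm_cat (IH _) (perm_cat (IH _) (perm_refl [:: m]))) _.
by rewrite perm_cat2l -cat1s perm_catC.
Qed.

Lemma aux_nil f : stack_sort_aux f [::] = [::].
Proof. by case: f. Qed.

Lemma aux_unfold f u : u != [::] ->
  stack_sort_aux f.+1 u =
  stack_sort_aux f (take (index (foldr maxn 0 u) u) u) ++
  stack_sort_aux f (drop (index (foldr maxn 0 u) u).+1 u) ++ [:: foldr maxn 0 u].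
Proof. by case: u. Qed.

Lemma fuel_irr f g s : size s <= f -> size s <= g ->
  stack_sort_aux f s = stack_sort_aux g s.
Proof.
elim: f g s => [|f IH] g s Hf Hg.
  by case: s Hf Hg => [_ _|//]; rewrite !aux_nil.
case: s Hf Hg => [|x s] Hf Hg; first by rewrite !aux_nil.
case: g Hg => [|g] Hg; first by [].
rewrite !aux_unfold //.
set t := x :: s; set m := foldr maxn 0 t.
have mt : m \in t by exact: max_in.
have Hi : index m t < size t by rewrite index_mem.
have Ht : size t = (size s).+1 by [].
have Hf1 : size s <= f by []. have Hg1 : size s <= g by []. clearbody t.
rewrite (IH g (take _ t)); last 2 first.
- rewrite size_take Hi; lia.
- rewrite size_take Hi; lia.
rewrite (IH g (drop _ t)) // size_drop; lia.
Qed.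

Lemma max_le u b : (forall y, y \in u -> y <= b) -> foldr maxn 0 u <= b.
Proof.
elim: u => [|x u IH] //= H; rewrite geq_max H ?inE ?eqxx // IH // => y yu.
by apply: H; rewrite inE yu orbT.
Qed.

Lemma filter_nil_in (p : pred nat) u : (forall y, y \in u -> ~~ p y) -> filter p u = [::].
Proof.
move=> H; rewrite -(filter_pred0 u); apply: eq_in_filter => y /H.
by move/negbTE.
Qed.

Lemma aux_filter (p : pred nat) (Hp : forall x y, x <= y -> p x -> p y) f s :
  stack_sort_aux f (filter p s) = filter p (stack_sort_aux f s).
Proof.
elim: f s => [|f IH] [|x s] //.
set t := x :: s.
set m := foldr maxn 0 t.
have mt : m \in t by exact: max_in.
have le_m : forall y, y \in t -> y <= m by move=> y; apply: max_ge.
case pm: (p m); last first.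
  have np : forall y, y \in t -> ~~ p y.
    by move=> y /le_m ym; apply/negP => /(Hp _ _ ym); rewrite pm.
  rewrite (@filter_nil_in p t np) aux_nil filter_nil_in // => y.
  by rewrite (perm_mem (perm_aux f.+1 t)); apply: np.
set A := take (index m t) t; set B := drop (index m t).+1 t.
have Et : filter p t = filter p A ++ m :: filter p B.
  by rewrite {1}(@split_at m t mt) filter_cat /= pm.
have mA : m \notin filter p A.
  by rewrite mem_filter in_take // ltnn andbF.
have Mu : foldr maxn 0 (filter p t) = m.
  apply/eqP; rewrite eqn_leq max_le ?max_ge //.
  - by rewrite Et mem_cat inE eqxx orbT.
  - by move=> y; rewrite mem_filter => /andP[_ /le_m].
have dropE : forall (A' B' : seq nat), drop (size A').+1 (A' ++ m :: B') = B'.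
  by move=> A' B'; elim: A' => [|a A' IHa] /=; rewrite ?drop0.
rewrite [stack_sort_aux _ t]aux_unfold // -/m -/A -/B.
rewrite aux_unfold; last by rewrite Et; case: (filter p A).
rewrite Mu Et index_cat (negbTE mA) /= eqxx addn0 take_size_cat // dropE.
by rewrite !IH !filter_cat /= pm.
Qed.

Lemma max_succ x s : foldr maxn 0 (map succn (x :: s)) = (foldr maxn 0 (x :: s)).+1.
Proof.
elim: s x => [|y s IH] x /=; first by rewrite !maxn0.
by have := IH y => /= ->; rewrite maxnSS.
Qed.

Lemma aux_map f s : stack_sort_aux f (map succn s) = map succn (stack_sort_aux f s).
Proof.
elim: f s => [|f IH] [|x s] //.
rewrite (@aux_unfold f (map succn (x :: s))) // (@aux_unfold f (x :: s)) //.
rewrite max_succ index_map; last by move=> a b [].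
by rewrite -map_take -map_drop !IH !map_cat.
Qed.

Definition ss3 s := stack_sort (stack_sort (stack_sort s)).

Lemma size_ss s : size (stack_sort s) = size s.
Proof. exact: perm_size (perm_aux _ _). Qed.

Lemma ss_map s : stack_sort (map succn s) = map succn (stack_sort s).
Proof. by rewrite /stack_sort size_map aux_map. Qed.

Lemma ss_filter (p : pred nat) (Hp : forall x y, x <= y -> p x -> p y) s :
  stack_sort (filter p s) = filter p (stack_sort s).
Proof.
rewrite /stack_sort -aux_filter //; apply: fuel_irr => //.
by rewrite size_filter count_size.
Qed.

Lemma filter_all_id (a : pred nat) s : all a s -> filter a s = s.
Proof. by move/all_filterP. Qed.

Lemma sortable_del k (pi : seq nat) :
  perm_eq pi (iota 1 k.+1) -> three_stack_sortable pi ->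
  let i := index 1 pi in
  let sigma := map predn (filter (fun y => 1 < y) pi) in
  [/\ i < k.+1, perm_eq sigma (iota 1 k), three_stack_sortable sigma &
      pi = take i (map succn sigma) ++ 1 :: drop i (map succn sigma)].
Proof.
move=> Hpi Hs i sigma.
set p := fun y : nat => 1 < y.
have Hp : forall x y, x <= y -> p x -> p y.
  by move=> x y xy px; rewrite /p (leq_trans px xy).
have mem_pi : forall y, (y \in pi) = (y \in iota 1 k.+1) by move=> y; apply: perm_mem.
have upi : uniq pi by rewrite (perm_uniq Hpi) iota_uniq.
have one_pi : 1 \in pi by rewrite mem_pi mem_iota.
have size_pi : size pi = k.+1 by rewrite (perm_size Hpi) size_iota.
have Esig : map succn sigma = filter p pi.
  rewrite -map_comp map_id_in // => y; rewrite mem_filter => /andP[h _] /=.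
  by rewrite prednK // ltnW.
have Hi : i < k.+1 by rewrite -size_pi index_mem.
have Esplit := @split_at 1 pi one_pi.
rewrite -/i in Esplit.
set A := take i pi in Esplit; set B := drop i.+1 pi in Esplit.
have sizeA : size A = i by rewrite size_take size_pi Hi.
have uB : 1 \notin B.
  by move: upi; rewrite Esplit cat_uniq /= => /and3P[_ _ /andP[]].
have uA : 1 \notin A by rewrite /A in_take // ltnn.
have pos : forall y, y \in pi -> 0 < y by move=> y; rewrite mem_pi mem_iota => /andP[].
have fA : filter p A = A.
  apply: filter_all_id; apply/allP => y yA; rewrite /p ltn_neqAle eq_sym.
  have yp : y \in pi by rewrite Esplit mem_cat yA.
  rewrite pos // andbT; apply/negP => /eqP E; by move: uA; rewrite -E yA.
have fB : filter p B = B.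
  apply: filter_all_id; apply/allP => y yB; rewrite /p ltn_neqAle eq_sym.
  have yp : y \in pi by rewrite Esplit mem_cat inE yB !orbT.
  rewrite pos // andbT; apply/negP => /eqP E; by move: uB; rewrite -E yB.
have Etau : filter p pi = A ++ B by rewrite {1}Esplit filter_cat /= fA fB.
split => //.
- apply: (@perm_map_inj _ _ succn); first by move=> a b [].
  rewrite Esig.
  have -> : map succn (iota 1 k) = filter p (iota 1 k.+1).
    rewrite /= /p /= filter_all_id.
      by rewrite (iotaDl 1 1).
    by apply/allP => y; rewrite mem_iota => /andP[].
  exact: perm_filter.
- rewrite /three_stack_sortable -(mono_sorted (f := succn) (e := ltn) (e' := ltn)); last first.
    by move=> a b.
  rewrite -!ss_map Esig !ss_filter //.
  by apply: sorted_filter; [exact: ltn_trans|].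
- by rewrite Esig Etau -sizeA take_size_cat // drop_size_cat.
Qed.

Lemma w_step k : w k.+1 <= k.+1 * w k.
Proof.
rewrite /w -!size_filter.
set S := filter three_stack_sortable (permutations (iota 1 k)).
set C := [seq take i (map succn sg) ++ 1 :: drop i (map succn sg) | sg <- S, i <- iota 0 k.+1].
have -> : k.+1 * size S = size C by rewrite size_allpairs size_iota mulnC.
apply: uniq_leq_size; first by rewrite filter_uniq // permutations_uniq.
move=> pi; rewrite mem_filter mem_permutations => /andP[Hs Hpi].
have [Hi Hperm Hsig E] := @sortable_del k pi Hpi Hs.
apply/allpairsP; eexists (_, _); split; last exact: E.
- by rewrite mem_filter Hsig mem_permutations.
- by rewrite mem_iota.
Qed.

Theorem proposition3p1 (N : nat) (ps : seq nat) (P : nat) :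
  1 <= N -> 0 < size ps -> all prime ps -> P = \prod_(p <- ps) p ->
  (forall n, 1 <= n <= N -> N * (w n %% P) < P) ->
  forall n, 1 <= n <= N -> w n %% P = w n.
Proof.
move=> HN Hsz Hpr HP H.
have P2 : 1 < P.
  rewrite HP; case: ps Hsz Hpr {HP H} => // q qs _ /andP[pq pqs].
  rewrite big_cons; have := prime_gt1 pq.
  have : 0 < \prod_(p <- qs) p.
    elim: qs pqs => [|r rs IHr]; first by rewrite big_nil.
    rewrite big_cons /= => /andP[pr prs]; rewrite muln_gt0 prime_gt0 //.
    exact: IHr.
  nia.
have main : forall n, n <= N -> w n < P.
  elim=> [|n IH] Hn; first by rewrite w0.
  have IHn := IH (ltnW Hn).
  have := w_step n.
  case: n IH Hn IHn => [|n] IH Hn IHn.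
    by rewrite w0 => h; apply: leq_ltn_trans h _.
  have := H n.+1; rewrite /= (ltnW Hn) modn_small // => /(_ isT) h1 h2.
  apply: leq_ltn_trans h2 _; apply: leq_ltn_trans h1.
  by rewrite leq_mul2r Hn orbT.
by move=> n /andP[_ Hn]; rewrite modn_small // main.
Qed.
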